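(* Let $\langle X,\tau,T\rangle$ be a conditional space and $\mathrm{Cm}=\langle\mathcal{P}(X),\to_T\rangle$ its full complex algebra. With $x,y,z$ ranging over $X$ and $Y,Z$ over closed subsets of $X$, and the inequalities in $\mathrm{Cm}$ holding for all elements: (T3* ) $(a\to c)\wedge(b\to c)\le(a\vee b)\to c$ holds in $\mathrm{Cm}$ iff for all $x,y$ and nonempty $Y$, $T(x,Y,y)$ implies there is $z\in Y$ with $T(x,\{z\},y)$; (T4) $a\to b\le c\to(a\to b)$ holds in $\mathrm{Cm}$ iff $T(x,Y,y)$ and $T(y,Z,z)$ imply $T(x,Z,z)$; (T5) $a\wedge(a\to b)\le b$ holds in $\mathrm{Cm}$ iff $T(x,\{x\},x)$ for all $x$; (T6) $a\to b\le\neg b\to\neg a$ holds in $\mathrm{Cm}$ iff $T(x,Y,y)$ implies there is $z\in Y$ with $T(x,\{y\},z)$; (T7) $\neg(a\to b)\le c\to\neg(a\to b)$ holds in $\mathrm{Cm}$ iff $T(x,Y,y)$ and $T(x,Z,z)$ imply $T(y,Z,z)$; (T8) $(1\to(\neg a\vee b))\wedge(b\to c)\le a\to c$ holds in $\mathrm{Cm}$ iff for all $x,y,Y,Z$: $T(x,Y,y)$ and $T(x,X)\cap Y\subseteq Z$ imply $T(x,Z,y)$.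
   Context: A conditional space is $\langle X,\tau,T\rangle$ with $\langle X,\tau\rangle$ a Boolean (compact, Hausdorff, zero-dimensional) space and $T\subseteq X\times\mathcal{C}(\tau)\times X$ ($\mathcal{C}(\tau)$ the closed sets) satisfying: (T1) $T(x,Y)=\{y:T(x,Y,y)\}$ is closed for all $x$ and closed $Y$; (T2) for clopen $U,V$, $U\to_T V$ is clopen; (T3) for closed $Y$, $T(x,Y,y)$ iff $T(x,U,y)$ for all clopen $U\supseteq Y$. For any $U,V\subseteq X$, $U\to_T V=\{x\in X:\text{for all closed } Z\subseteq U,\ T(x,Z)\subseteq V\}$. In $\mathrm{Cm}$, $\wedge,\vee,\neg,1$ are intersection, union, complement and $X$. *)

(* Defs.v *)
From HB Require Import structures.
From mathcomp Require Import all_boot all_order.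
From mathcomp Require Import all_classical topology.
Set Implicit Arguments. Unset Strict Implicit. Unset Printing Implicit Defensive.
Local Open Scope classical_set_scope.

Definition clopen_base (X : topologicalType) : Prop :=
  forall (x : X) (U : set X), open U -> U x ->
    exists V : set X, [/\ clopen V, V x & V `<=` U].

Definition boolean_space (X : topologicalType) : Prop :=
  [/\ compact [set: X], hausdorff_space X & clopen_base X].

(* The ternary relation T ⊆ X × C(τ) × X is encoded as a predicate
   T x Y y; the first condition says it only relates closed middle arguments. *)
Definition Tsec (X : Type) (T : X -> set X -> X -> Prop) (x : X) (Y : set X)
  : set X := [set y | T x Y y].

Definition Tarrow (X : topologicalType) (T : X -> set X -> X -> Prop)
  (U V : set X) : set X :=
  [set x | forall Z : set X, closed Z -> Z `<=` U -> Tsec T x Z `<=` V].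

Definition conditional_relation (X : topologicalType)
  (T : X -> set X -> X -> Prop) : Prop :=
  [/\ (forall x Y y, T x Y y -> closed Y),
      (forall x (Y : set X), closed Y -> closed (Tsec T x Y)),
      (forall U V : set X, clopen U -> clopen V -> clopen (Tarrow T U V)) &
      (forall x (Y : set X) y, closed Y ->
         (T x Y y <-> forall U : set X, clopen U -> Y `<=` U -> T x U y))].

Definition conditional_space (X : topologicalType)
  (T : X -> set X -> X -> Prop) : Prop :=
  boolean_space X /\ conditional_relation T.

(* Main.v *)
Require Import Defs.
From HB Require Import structures.
From mathcomp Require Import all_boot all_order.
From mathcomp Require Import all_classical topology.
Local Open Scope classical_set_scope.

Lemma T_closed {X : topologicalType} {T : X -> set X -> X -> Prop}
  (HXT : conditional_space T) {x Y y} : T x Y y -> closed Y.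
Proof. by case: HXT => _ [H _ _ _]; apply: H. Qed.

Lemma T_mono {X : topologicalType} {T : X -> set X -> X -> Prop}
  (HXT : conditional_space T) {x} {Y Y' : set X} {y} :
  closed Y' -> Y `<=` Y' -> T x Y y -> T x Y' y.
Proof.
move=> cY' sY HT; have cY := T_closed HXT HT.
case: HXT => _ [_ _ _ H3].
apply/(H3 _ _ _ cY') => U cU sU.
by move/(H3 _ _ _ cY): HT; apply => //; apply: subset_trans sU.
Qed.

Lemma set1_closed {X : topologicalType} {T : X -> set X -> X -> Prop}
  (HXT : conditional_space T) (x : X) : closed [set x].
Proof.
case: HXT => [[_ H _] _].
exact/accessible_closed_set1/hausdorff_accessible.
Qed.

Lemma arrow_self {X : topologicalType} {T : X -> set X -> X -> Prop}
  (HXT : conditional_space T) x (Y : set X) :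
  closed Y -> Tarrow T Y (Tsec T x Y) x.
Proof. by move=> cY Z cZ sZ w /= HT; apply: (T_mono HXT cY sZ HT). Qed.

Lemma partT5 {X : topologicalType} {T : X -> set X -> X -> Prop}
  (HXT : conditional_space T) :
  (forall a b : set X, a `&` Tarrow T a b `<=` b)
   <-> (forall x : X, T x [set x] x).
Proof.
split.
  move=> H x; have c1 := set1_closed HXT x.
  apply: (H [set x] (Tsec T x [set x]) x); split => //.
  exact: arrow_self.
move=> H a b x [ax Hx]; apply: (Hx [set x] (set1_closed HXT x)) (H x).
by move=> _ ->.
Qed.

Lemma partT4 {X : topologicalType} {T : X -> set X -> X -> Prop}
  (HXT : conditional_space T) :
  (forall a b c : set X, Tarrow T a b `<=` Tarrow T c (Tarrow T a b))
   <-> (forall (x y z : X) (Y Z : set X), closed Y -> closed Z ->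
          T x Y y -> T y Z z -> T x Z z).
Proof.
split.
  move=> H x y z Y Z cY cZ Txy Tyz.
  have := H Z (Tsec T x Z) Y x (arrow_self HXT x Z cZ) Y cY (@subset_refl _ _) y Txy.
  by move=> /(_ Z cZ (@subset_refl _ _) z Tyz).
move=> H a b c x Hx Y cY sY y Txy Z cZ sZ z Tyz.
exact: (Hx Z cZ sZ z (H x y z Y Z cY cZ Txy Tyz)).
Qed.

Lemma partT6 {X : topologicalType} {T : X -> set X -> X -> Prop}
  (HXT : conditional_space T) :
  ((forall a b : set X, Tarrow T a b `<=` Tarrow T (~` b) (~` a))
   <-> (forall (x y : X) (Y : set X), closed Y ->
          T x Y y -> exists2 z, Y z & T x [set y] z)).
Proof.
split.
  move=> H x y Y cY Txy.
  apply: contrapT => Hn.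
  have c1 := set1_closed HXT y.
  have := H [set y] (Tsec T x [set y]) x (arrow_self HXT x [set y] c1) Y cY.
  have sY : Y `<=` ~` Tsec T x [set y].
    by move=> z Yz Tz; apply: Hn; exists z.
  by move=> /(_ sY y Txy); apply.
move=> H a b x Hx Z cZ sZ w Txw aw.
have [z Zz Tz] := H x w Z cZ Txw.
apply: (sZ z Zz); apply: (Hx [set w] (set1_closed HXT w)) Tz.
by move=> _ ->.
Qed.

Lemma partT7 {X : topologicalType} {T : X -> set X -> X -> Prop}
  (HXT : conditional_space T) :
  ((forall a b c : set X, ~` Tarrow T a b `<=` Tarrow T c (~` Tarrow T a b))
   <-> (forall (x y z : X) (Y Z : set X), closed Y -> closed Z ->
          T x Y y -> T x Z z -> T y Z z)).
Proof.
split.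
  move=> H x y z Y Z cY cZ Txy Txz.
  apply: contrapT => Hn.
  have Hx : ~ Tarrow T Z (~` [set z]) x.
    by move=> /(_ Z cZ (@subset_refl _ _) z Txz); apply.
  have := H Z (~` [set z]) Y x Hx Y cY (@subset_refl _ _) y Txy.
  apply => W cW sW w Tyw wz; rewrite wz in Tyw.
  by apply: Hn; apply: (T_mono HXT cZ sW Tyw).
move=> H a b c x Hx Y cY sY y Txy Hy.
apply: Hx => Z cZ sZ z Txz.
exact: (Hy Z cZ sZ z (H x y z Y Z cY cZ Txy Txz)).
Qed.

Lemma partT8 {X : topologicalType} {T : X -> set X -> X -> Prop}
  (HXT : conditional_space T) :
  ((forall a b c : set X,
      Tarrow T setT (~` a `|` b) `&` Tarrow T b c `<=` Tarrow T a c)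
   <-> (forall (x y : X) (Y Z : set X), closed Y -> closed Z ->
          T x Y y -> Tsec T x setT `&` Y `<=` Z -> T x Z y)).
Proof.
split.
  move=> H x y Y Z cY cZ Txy sZ.
  apply: (H Y Z (Tsec T x Z) x _ Y cY (@subset_refl _ _) y Txy).
  split; last exact: arrow_self.
  move=> W cW _ w Tw.
  have TXw : T x setT w by apply: (T_mono HXT closedT _ Tw).
  have [Yw|nYw] := pselect (Y w); last by left.
  by right; apply: sZ.
move=> H a b c x [H1 H2] Y cY sY y Txy.
have cTX : closed (Tsec T x setT).
  by case: HXT => _ [_ H1' _ _]; apply: H1'; exact: closedT.
have cZ : closed (Tsec T x setT `&` Y) by apply: closedI.
apply: (H2 _ cZ) (H x y Y _ cY cZ Txy (@subset_refl _ _)).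
move=> w [Tw Yw].
have := H1 setT closedT (@subset_refl _ _) w Tw.
by case => // /(_ (sY w Yw)).
Qed.

Lemma partT3 {X : topologicalType} {T : X -> set X -> X -> Prop}
  (HXT : conditional_space T) :
  ((forall a b c : set X,
      Tarrow T a c `&` Tarrow T b c `<=` Tarrow T (a `|` b) c)
   <-> (forall (x y : X) (Y : set X), closed Y -> Y !=set0 ->
          T x Y y -> exists2 z, Y z & T x [set z] y)).
Proof.
split; last first.
  move=> H a b c x [Ha Hb] Z cZ sZ y Txy.
  have [ne|nne] := pselect (Z !=set0); last first.
    apply: (Ha Z cZ _ y Txy) => z Zz; exfalso; apply: nne; by exists z.
  have [z Zz Tz] := H x y Z cZ ne Txy.
  case: (sZ z Zz) => [az|bz].
    by apply: (Ha [set z] (set1_closed HXT z) _ y Tz) => _ ->.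
  by apply: (Hb [set z] (set1_closed HXT z) _ y Tz) => _ ->.
move=> Hineq x y Y cY [z0 Yz0] Txy.
apply: contrapT => Hn.
pose good (G : set X) := Tarrow T G (~` [set y]) x.
have goodU : forall G1 G2, good G1 -> good G2 -> good (G1 `|` G2).
  by move=> G1 G2 g1 g2; apply: Hineq.
have goodS : forall G G', G' `<=` G -> good G -> good G'.
  move=> G G' sG g W cW sW; apply: g cW _.
  exact: subset_trans sW sG.
have loc : forall z, Y z -> exists U, [/\ open U, U z & good U].
  move=> z Yz.
  have c1 := set1_closed HXT z.
  have nT : ~ T x [set z] y by move=> Tz; apply: Hn; exists z.
  have [U [cU sU nTU]] : exists U, [/\ clopen U, [set z] `<=` U & ~ T x U y].
    apply: contrapT => Hne; apply: nT.
    have [_ [_ _ _ H3]] := HXT.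
    apply/(H3 _ _ _ c1) => U cU sU.
    by apply: contrapT => nTU; apply: Hne; exists U.
  exists U; split; first by case: cU.
    exact: sU.
  move=> W cW sW w Tw wy; rewrite wy in Tw; apply: nTU.
  by apply: (T_mono HXT _ sW Tw); case: cU.
pose F := filter_from good (fun G => Y `\` G).
have [U0 [oU0 U0z0 gU0]] := loc z0 Yz0.
have FF : ProperFilter F.
  apply: filter_from_proper.
    apply: filter_from_filter; first by exists U0.
    move=> G1 G2 g1 g2; exists (G1 `|` G2); first exact: goodU.
    by move=> w [Yw nG]; split; split => // ?; apply: nG; [left|right].
  move=> G gG; apply: contrapT => ne.
  have sYG : Y `<=` G.
    move=> w Yw; apply: contrapT => nGw; apply: ne; by exists w.
  by apply: (goodS G Y sYG gG Y cY (@subset_refl _ _) y Txy).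
have FY : F Y by exists U0 => // w [].
have cptY : compact Y.
  apply: (subclosed_compact cY _ (@subsetT _ Y)).
  by have [[? _ _] _] := HXT.
have [p [Yp clp]] := cptY F FF FY.
have [Up [oUp Upp gUp]] := loc p Yp.
have FYU : F (Y `\` Up) by exists Up.
have [w [[_ nUw] Uw]] := clp _ _ FYU (open_nbhs_nbhs (conj oUp Upp)).
by apply: nUw.
Qed.

Theorem theorem9p9 (X : topologicalType) (T : X -> set X -> X -> Prop)
  (HXT : conditional_space T) :
  (* (T3-star) *)
  ((forall a b c : set X,
      Tarrow T a c `&` Tarrow T b c `<=` Tarrow T (a `|` b) c)
   <-> (forall (x y : X) (Y : set X), closed Y -> Y !=set0 ->
          T x Y y -> exists2 z, Y z & T x [set z] y))
  /\
  (* (T4) *)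
  ((forall a b c : set X, Tarrow T a b `<=` Tarrow T c (Tarrow T a b))
   <-> (forall (x y z : X) (Y Z : set X), closed Y -> closed Z ->
          T x Y y -> T y Z z -> T x Z z))
  /\
  (* (T5) *)
  ((forall a b : set X, a `&` Tarrow T a b `<=` b)
   <-> (forall x : X, T x [set x] x))
  /\
  (* (T6) *)
  ((forall a b : set X, Tarrow T a b `<=` Tarrow T (~` b) (~` a))
   <-> (forall (x y : X) (Y : set X), closed Y ->
          T x Y y -> exists2 z, Y z & T x [set y] z))
  /\
  (* (T7) *)
  ((forall a b c : set X, ~` Tarrow T a b `<=` Tarrow T c (~` Tarrow T a b))
   <-> (forall (x y z : X) (Y Z : set X), closed Y -> closed Z ->
          T x Y y -> T x Z z -> T y Z z))
  /\
  (* (T8) *)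
  ((forall a b c : set X,
      Tarrow T setT (~` a `|` b) `&` Tarrow T b c `<=` Tarrow T a c)
   <-> (forall (x y : X) (Y Z : set X), closed Y -> closed Z ->
          T x Y y -> Tsec T x setT `&` Y `<=` Z -> T x Z y)).
Proof.
split; first exact: partT3.
split; first exact: partT4.
split; first exact: partT5.
split; first exact: partT6.
split; first exact: partT7.
exact: partT8.
Qed.
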